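(* Assume the standing assumptions with $L>\mu>0$, and let $x^*$ be a minimizer of $F$. Let $q:=\mu/L$, fix $r\in(\sqrt q,1/\sqrt q)$, set $\alpha:=r\sqrt q$ and $\theta:=(1-r^{-1}\sqrt q)(1-r\sqrt q)(1-q)^{-1}$. Consider the algorithm: $y_1=x_1\in\mathbb R^n$ arbitrary, and for $k\ge1$, $$x_{k+1}:=T_L(y_k)=y_k-L^{-1}\mathcal G_L(y_k),\qquad y_{k+1}:=x_{k+1}+\theta(x_{k+1}-x_k).$$ Then for all $k\ge1$, $$F(x_{k+1})-F(x^* )+\frac{L\alpha^2}{2}\big\|x_{k+1}-x^*+(\alpha^{-1}-1)(x_{k+1}-x_k)\big\|^2\le\Big(1-\min\Big(\frac{\mu}{\alpha L},\alpha\Big)\Big)^k\Big(F(x_1)-F(x^* )+\frac{L\alpha^2}{2}\|x_1-x^*\|^2\Big).$$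
   Context: Standing assumptions: $f:\mathbb R^n\to\mathbb R$ differentiable with $L$-Lipschitz gradient and $\mu$-strongly convex (i.e. $f-\frac\mu2\|\cdot\|^2$ convex); $g:\mathbb R^n\to\mathbb R\cup\{+\infty\}$ proper, closed, convex; $F=f+g$. $T_L(y):=\operatorname{argmin}_x\{g(x)+\langle\nabla f(y),x\rangle+\frac L2\|x-y\|^2\}$, $\mathcal G_L(y):=L(y-T_L(y))$. The right-hand side is $+\infty$ if $x_1\notin\operatorname{dom}g$. *)

(* Defs.v *)
(* R^n is modelled as row vectors 'rV[R]_n,
   with the Euclidean inner product written out explicitly. *)
From HB Require Import structures.
From mathcomp Require Import all_boot all_order all_algebra.
From mathcomp Require Import all_classical all_reals all_analysis.
Set Implicit Arguments. Unset Strict Implicit. Unset Printing Implicit Defensive.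
Import Order.TTheory GRing.Theory Num.Theory.
Import numFieldNormedType.Exports.
Local Open Scope classical_set_scope.
Local Open Scope ring_scope.

Section Defs.
Variables (R : realType) (n : nat).
Local Notation V := 'rV[R]_n.

Definition dotv (u v : V) : R := \sum_(i < n) u 0 i * v 0 i.
Definition sqnorm (u : V) : R := dotv u u.
Definition enorm (u : V) : R := Num.sqrt (sqnorm u).

Definition is_gradient (f : V -> R) (gradf : V -> V) : Prop :=
  forall x, differentiable f x /\ forall h, 'd f x h = dotv (gradf x) h.

Definition lipschitz_grad (gradf : V -> V) (L : R) : Prop :=
  forall x y, enorm (gradf x - gradf y) <= L * enorm (x - y).

Definition convex_fun (h : V -> R) : Prop :=
  forall x y (t : R), 0 <= t <= 1 ->
    h (t *: x + (1 - t) *: y) <= t * h x + (1 - t) * h y.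

Definition strongly_convex (f : V -> R) (mu : R) : Prop :=
  convex_fun (fun x => f x - mu / 2 * sqnorm x).

Definition proper_fun (g : V -> \bar R) : Prop :=
  (forall x, g x != -oo%E) /\ exists x, g x != +oo%E.

Definition closed_fun (g : V -> \bar R) : Prop :=
  forall a : R, closed [set x | (g x <= a%:E)%E].

Definition convex_efun (g : V -> \bar R) : Prop :=
  forall x y : V, forall t : R, 0 <= t <= 1 ->
    (g (t *: x + (1 - t) *: y)%R <= (t%:E * g x) + ((1 - t)%:E * g y))%E.

Definition compF (f : V -> R) (g : V -> \bar R) (x : V) : \bar R :=
  ((f x)%:E + g x)%E.

Definition is_argmin (phi : V -> \bar R) (x : V) : Prop :=
  forall z, (phi x <= phi z)%E.

Definition prox_obj (g : V -> \bar R) (gradf : V -> V) (L : R) (y : V)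
  (x : V) : \bar R :=
  (g x + (dotv (gradf y) x + L / 2 * sqnorm (x - y))%:E)%E.

Definition is_TL (g : V -> \bar R) (gradf : V -> V) (L : R) (y x : V) : Prop :=
  is_argmin (prox_obj g gradf L y) x.

End Defs.

(* Main.v *)
Require Import Defs.
From HB Require Import structures.
From mathcomp Require Import all_boot all_order all_algebra.
From mathcomp Require Import all_classical all_reals all_analysis.
From mathcomp Require Import ring lra.
Import Order.TTheory GRing.Theory Num.Theory.
Import numFieldNormedType.Exports.
Local Open Scope ring_scope.

Set Implicit Arguments.
Section S.
Variables (R : realType) (n : nat).
Local Notation V := 'rV[R]_n.

Lemma dotvC (u v : V) : dotv u v = dotv v u.
Proof. by rewrite /dotv; apply: eq_bigr => i _; rewrite mulrC. Qed.
Lemma dotvDl (u v w : V) : dotv (u + v) w = dotv u w + dotv v w.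
Proof. by rewrite /dotv -big_split; apply: eq_bigr => i _; rewrite mxE mulrDl. Qed.
Lemma dotvZl (a : R) (u w : V) : dotv (a *: u) w = a * dotv u w.
Proof. by rewrite /dotv mulr_sumr; apply: eq_bigr => i _; rewrite mxE mulrA. Qed.
Lemma dotvNl (u w : V) : dotv (- u) w = - dotv u w.
Proof. by rewrite -scaleN1r dotvZl mulN1r. Qed.
Lemma dotvDr (u v w : V) : dotv w (u + v) = dotv w u + dotv w v.
Proof. by rewrite dotvC dotvDl !(dotvC w). Qed.
Lemma dotvZr (a : R) (u w : V) : dotv w (a *: u) = a * dotv w u.
Proof. by rewrite dotvC dotvZl dotvC. Qed.
Lemma dotvNr (u w : V) : dotv w (- u) = - dotv w u.
Proof. by rewrite dotvC dotvNl dotvC. Qed.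
Lemma sqnorm_ge0 (u : V) : 0 <= sqnorm u.
Proof. by rewrite /sqnorm /dotv; apply: sumr_ge0 => i _; rewrite -expr2 sqr_ge0. Qed.

Lemma dot_bound (a d : V) (c : R) : 0 < c -> sqnorm a <= c ^+ 2 * sqnorm d ->
  dotv a d <= c * sqnorm d /\ - (c * sqnorm d) <= dotv a d.
Proof.
move=> c0 h.
have h1 := sqnorm_ge0 (a - c *: d).
have h2 := sqnorm_ge0 (a + c *: d).
move: h1 h2; rewrite /sqnorm !(dotvDl, dotvDr, dotvNl, dotvNr, dotvZl, dotvZr) (dotvC d a).
rewrite -/(sqnorm a) -/(sqnorm d) => h1 h2.
split; nra.
Qed.

Lemma small_t (a b : R) : (forall t, 0 < t < 1 -> a <= b * t) -> a <= 0.
Proof.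
move=> h; rewrite leNgt; apply/negP => a0.
have [b0|b0] := lerP b 0.
  have := h (1/2) ltac:(lra). nra.
pose t := Num.min (1/2) (a / (2 * b)).
have t0 : 0 < t by rewrite lt_min; apply/andP; split; [lra| apply: divr_gt0; lra].
have t1 : t <= 1/2 by rewrite ge_min lexx.
have t2 : t <= a / (2 * b) by rewrite ge_min lexx orbT.
have := h t ltac:(lra).
have : b * t <= b * (a / (2 * b)) by rewrite ler_pM2l.
have -> : b * (a / (2 * b)) = a / 2 by field; lra.
lra.
Qed.

Lemma psi_der (f : V -> R) gradf (hg : is_gradient f gradf) (d y : V) (c : R) :
  is_derive c 1 (fun t : R => f (t *: d + y)) (dotv (gradf (c *: d + y)) d).
Proof.
pose l := (( *:%R^~ d) + cst y : R -> V).
have dl : forall t : R, is_diff t l (( *:%R^~ d) + 0).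
  move=> t; apply: is_diffD.
have [df dfv] := hg (c *: d + y).
have [dlx dlv] := dl c.
have dfc : differentiable (f \o l) c.
  exact: differentiable_comp.
change (is_derive c 1 (f \o l) (dotv (gradf (c *: d + y)) d)).
apply: (@is_derive_eq _ _ _ _ _ _ _ ('D_1 (f \o l) c)).
  exact/derivableP/diff_derivable.
rewrite deriveE // diff_comp // /= dlv /= addr0 scale1r.
exact: dfv.
Qed.

Lemma psi_cont (f : V -> R) gradf (hg : is_gradient f gradf) (d y : V) :
  continuous (fun t : R => f (t *: d + y)).
Proof.
move=> c.
have := @psi_der f gradf hg d y c => -[dd _].
apply: differentiable_continuous.
by apply/derivable1_diffP.
Qed.


Lemma der_cont (h dh : R -> R) : (forall t : R, is_derive t (1:R) h (dh t)) -> continuous h.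
Proof.
move=> H t; have [hd _] := H t; apply: differentiable_continuous.
exact/derivable1_diffP.
Qed.

Lemma lip_sq gradf (L : R) (hL : lipschitz_grad gradf L) (L0 : 0 <= L) (x y : V) :
  sqnorm (gradf x - gradf y) <= L ^+ 2 * sqnorm (x - y).
Proof.
have h := hL x y; rewrite /enorm in h.
have s1 := sqnorm_ge0 (gradf x - gradf y); have s2 := sqnorm_ge0 (x - y).
rewrite -[sqnorm (gradf x - gradf y)](sqr_sqrtr s1) -[sqnorm (x - y)](sqr_sqrtr s2).
have := sqrtr_ge0 (sqnorm (gradf x - gradf y)); have := sqrtr_ge0 (sqnorm (x - y)).
nra.
Qed.

Lemma sqnormZ (t : R) (d : V) : sqnorm (t *: d) = t ^+ 2 * sqnorm d.
Proof. by rewrite /sqnorm dotvZl dotvZr mulrA expr2. Qed.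

Lemma grad_bound gradf (L : R) (hL : lipschitz_grad gradf L) (L0 : 0 < L)
  (d y : V) (c : R) : 0 < c ->
  dotv (gradf (c *: d + y) - gradf y) d <= L * c * sqnorm d /\
  - (L * c * sqnorm d) <= dotv (gradf (c *: d + y) - gradf y) d.
Proof.
move=> c0; apply: dot_bound; first exact: mulr_gt0.
have := lip_sq hL (ltW L0) (c *: d + y) y.
by rewrite addrK sqnormZ mulrA -exprMn.
Qed.

Lemma poly_der (D Q t : R) :
  is_derive t 1 (fun s : R => D * s + Q * s ^+ 2) (D + Q * (2 * t)).
Proof.
pose p : {poly R} := D *: 'X + Q *: 'X^2.
have -> : (fun s : R => D * s + Q * s ^+ 2) = horner p.
  by apply/funext => s; rewrite /p !hornerE.
apply: (is_derive_eq (is_derive_poly p t)).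
rewrite /p derivD !derivZ derivX derivXn !hornerE /=. ring.
Qed.

Lemma descent (f : V -> R) gradf (L : R) (hg : is_gradient f gradf)
  (hL : lipschitz_grad gradf L) (L0 : 0 < L) (y x : V) :
  f x <= f y + dotv (gradf y) (x - y) + L / 2 * sqnorm (x - y).
Proof.
have hx : x = (x - y) + y by rewrite subrK.
move: (x - y) hx => d ->.
pose D := dotv (gradf y) d; pose S := sqnorm d.
pose phi := ((fun t : R => f (t *: d + y)) - (fun s : R => D * s + L / 2 * S * s ^+ 2)).
have der : forall t : R, is_derive t (1:R) phi (dotv (gradf (t *: d + y)) d - (D + L / 2 * S * (2 * t))).
  move=> t; apply: is_deriveB; [exact: psi_der | exact: poly_der].
have [c cI hc] := MVT (ltr01 : (0 : R) < 1) (fun t _ => der t)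
  (continuous_subspaceT (@der_cont _ _ der)).
move: cI; rewrite in_itv /= => /andP[c0 c1].
have {}hc : (f (1 *: d + y) - (D * 1 + L / 2 * S * 1 ^+ 2)) - (f (0 *: d + y) - (D * 0 + L / 2 * S * 0 ^+ 2))
  = (dotv (gradf (c *: d + y)) d - (D + L / 2 * S * (2 * c))) * (1 - 0) := hc.
move: hc; rewrite scale1r scale0r add0r expr1n expr0n /= !mulr0 !mulr1 addr0 subr0 subr0 => hc.
have [h1 _] := @grad_bound gradf L hL L0 d y c c0.
move: h1; rewrite dotvDl dotvNl -/D -/S => h1.
suff : f (d + y) - f y <= D + L / 2 * S by rewrite -/D -/S; lra.
lra.
Qed.

Lemma sc_grad (f : V -> R) gradf (L mu : R) (hg : is_gradient f gradf)
  (hL : lipschitz_grad gradf L) (L0 : 0 < L) (hsc : strongly_convex f mu)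
  (y z : V) :
  f y + dotv (gradf y) (z - y) + mu / 2 * sqnorm (z - y) <= f z.
Proof.
have hz : z = (z - y) + y by rewrite subrK.
move: (z - y) hz => d ->.
pose D := dotv (gradf y) d; pose S := sqnorm d.
have S0 : 0 <= S by exact: sqnorm_ge0.
suff : D + mu / 2 * S - (f (d + y) - f y) <= 0 by rewrite -/D -/S; lra.
apply: (@small_t _ ((L + mu / 2) * S)) => t /andP[t0 t1].
have hc := hsc (d + y) y t ltac:(apply/andP; split; exact: ltW).
have e : t *: (d + y) + (1 - t) *: y = t *: d + y.
  by apply/rowP => i; rewrite !mxE; ring.
move: hc; rewrite /= e /sqnorm !(dotvDl, dotvDr, dotvZl, dotvZr) (dotvC y d).
rewrite -/(sqnorm d) -/S => hc.
have der : forall s : R, is_derive s (1:R) (fun s : R => f (s *: d + y)) (dotv (gradf (s *: d + y)) d).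
  move=> s; exact: psi_der.
have [c cI hm] := MVT t0 (fun s _ => der s)
  (continuous_subspaceT (@der_cont _ _ der)).
move: cI; rewrite in_itv /= => /andP[c0 c1].
move: hm; rewrite /= scale0r add0r subr0 => hm.
have [_ h1] := @grad_bound gradf L hL L0 d y c c0.
move: h1; rewrite dotvDl dotvNl -/D -/S => h1.
have h2 : L * c * S <= L * t * S.
  by rewrite ler_wpM2r // ler_wpM2l // ltW.
have e4 : t * (D - L * t * S) <= t * dotv (gradf (c *: d + y)) d.
  rewrite ler_wpM2l //; [exact: ltW | lra].
rewrite -(ler_pM2l t0).
lra.
Qed.

Lemma prox_opt (g : V -> \bar R) gradf (L : R) (L0 : 0 < L) (hconv : convex_efun g)
  (y xp z : V) (gz gp : R) :
  is_TL g gradf L y xp -> g z = gz%:E -> g xp = gp%:E ->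
  dotv (L *: (y - xp) - gradf y) (z - xp) <= gz - gp.
Proof.
move=> hT hz hp.
suff: dotv (L *: (y - xp) - gradf y) (z - xp) - (gz - gp) <= 0 by lra.
apply: (@small_t _ (L / 2 * sqnorm (z - xp))) => t /andP[t0 t1].
have hc := hconv z xp t ltac:(apply/andP; split; exact: ltW).
rewrite hz hp in hc.
have ho := hT (t *: z + (1 - t) *: xp).
rewrite /prox_obj hp in ho.
have h : (gp%:E + (dotv (gradf y) xp + L / 2 * sqnorm (xp - y))%:E <=
   (t * gz + (1 - t) * gp)%:E + (dotv (gradf y) (t *: z + (1 - t) *: xp) +
      L / 2 * sqnorm (t *: z + (1 - t) *: xp - y))%:E)%E.
  apply: (le_trans ho); apply: leeD2r; exact: hc.
rewrite -!EFinD lee_fin in h.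
have e1 : t *: z + (1 - t) *: xp - y = t *: (z - xp) + (xp - y).
  by apply/rowP => i; rewrite !mxE; ring.
have e2 : t *: z + (1 - t) *: xp = t *: (z - xp) + xp.
  by apply/rowP => i; rewrite !mxE; ring.
have e3 : y - xp = - (xp - y) by rewrite opprB.
rewrite e1 e2 in h; rewrite e3.
move: (z - xp) (xp - y) (gradf y) h => e b gy h.
move: h; rewrite /sqnorm !(dotvDl, dotvDr, dotvZl, dotvZr, dotvNl, dotvNr) (dotvC b e).
move=> h.
rewrite -(ler_pM2l t0).
lra.
Qed.

Lemma key (f : V -> R) gradf (g : V -> \bar R) (L mu : R) (hg : is_gradient f gradf)
  (hL : lipschitz_grad gradf L) (L0 : 0 < L) (hsc : strongly_convex f mu)
  (hconv : convex_efun g) (y xn z : V) (gz gn : R) :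
  is_TL g gradf L y xn -> g z = gz%:E -> g xn = gn%:E ->
  f xn + gn + dotv (L *: (y - xn)) (z - y) + sqnorm (L *: (y - xn)) / (2 * L)
    + mu / 2 * sqnorm (z - y) <= f z + gz.
Proof.
move=> hT hz hn.
have h1 := @prox_opt g gradf L L0 hconv y xn z gz gn hT hz hn.
have h2 := sc_grad hg hL L0 hsc y z.
have h3 := descent hg hL L0 y xn.
have e1 : z - xn = (z - y) - (xn - y) by apply/rowP => i; rewrite !mxE; ring.
have e2 : y - xn = - (xn - y) by rewrite opprB.
rewrite e1 e2 in h1; rewrite e2.
have e4 : sqnorm (L *: - (xn - y)) / (2 * L) = L / 2 * sqnorm (xn - y).
  rewrite sqnormZ /sqnorm dotvNl dotvNr opprK; field; lra.
rewrite e4.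
move: (z - y) (xn - y) (gradf y) h1 h2 h3 => a b gy h1 h2 h3.
move: h1 h2 h3; rewrite /sqnorm !(dotvDl, dotvDr, dotvZl, dotvZr, dotvNl, dotvNr) (dotvC b a) (dotvC gy a) (dotvC gy b).
move=> h1 h2 h3.
lra.
Qed.
Lemma step_alg (L mu al th rho A B : R) (u d G : V) :
  0 < mu -> mu < L -> mu / L < al -> al < 1 ->
  th = (1 - mu / L / al) * (1 - al) / (1 - mu / L) ->
  (rho = mu / L / al /\ mu / L / al <= al) \/ (rho = al /\ al <= mu / L / al) ->
  0 <= B ->
  A + dotv G (- (th *: d)) + sqnorm G / (2 * L) + mu / 2 * sqnorm (- (th *: d)) <= B ->
  A + dotv G (- (u + th *: d)) + sqnorm G / (2 * L) + mu / 2 * sqnorm (- (u + th *: d)) <= 0 ->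
  A + L * al ^+ 2 / 2 * sqnorm (u + th *: d - L^-1 *: G + (al^-1 - 1) *: (th *: d - L^-1 *: G))
    <= (1 - rho) * (B + L * al ^+ 2 / 2 * sqnorm (u + (al^-1 - 1) *: d)).
Proof.
move=> mu0 muL qal al1 hth hrho hB K1 K2.
have L0 : 0 < L by lra.
have q0 : 0 < mu / L by apply: divr_gt0.
have q1 : mu / L < 1 by rewrite ltr_pdivrMr // mul1r.
have al0 : 0 < al by lra.
have qa1 : mu / L / al < 1 by rewrite ltr_pdivrMr // mul1r.
have qa0 : 0 < mu / L / al by apply: divr_gt0.
have qaq : mu / L <= mu / L / al.
  by rewrite ler_pdivlMr //; nra.
have dd0 := sqnorm_ge0 d.
have rhoal : rho <= al by case: hrho => -[-> h] //; lra.
rewrite -subr_ge0.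
case: hrho => -[hr hcase].
- set c1 := (1 - al) ^+ 2 * (1 - mu / L / al) * (mu / L / al - mu / L) / (1 - mu / L).
  have c10 : 0 <= c1.
    rewrite /c1; apply: divr_ge0; last lra.
    apply: mulr_ge0; last lra.
    apply: mulr_ge0; [exact: sqr_ge0 | lra].
  lazymatch goal with |- is_true ((0 : R) <= ?e) => have -> : e =
    (1 - al) * (B - (A + dotv G (- (th *: d)) + sqnorm G / (2 * L) + mu / 2 * sqnorm (- (th *: d))))
    + al * (0 - (A + dotv G (- (u + th *: d)) + sqnorm G / (2 * L) + mu / 2 * sqnorm (- (u + th *: d))))
    + (al - rho) * B + L * c1 * sqnorm d / 2 end.
    rewrite /c1 hr hth /sqnorm !(dotvDl, dotvDr, dotvZl, dotvZr, dotvNl, dotvNr).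
    rewrite ?(dotvC d u) ?(dotvC G u) ?(dotvC G d).
    field; lra.
  have h1 : 0 <= (1 - al) * (B - (A + dotv G (- (th *: d)) + sqnorm G / (2 * L) + mu / 2 * sqnorm (- (th *: d)))).
    by apply: mulr_ge0; lra.
  have h2 : 0 <= al * (0 - (A + dotv G (- (u + th *: d)) + sqnorm G / (2 * L) + mu / 2 * sqnorm (- (u + th *: d)))).
    by apply: mulr_ge0; lra.
  have h3 : 0 <= (al - rho) * B by apply: mulr_ge0; lra.
  have h4 : 0 <= L * c1 * sqnorm d / 2.
    by apply: divr_ge0 => //; apply: mulr_ge0 => //; apply: mulr_ge0 => //; lra.
  lra.
- set c2 := (1 - al) ^+ 3 * (al - mu / L) * (mu / L) / (al ^+ 2 * (1 - mu / L)).
  have c20 : 0 <= c2.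
    rewrite /c2; apply: divr_ge0; last by apply: mulr_ge0; [exact: sqr_ge0 | lra].
    apply: mulr_ge0; last lra.
    apply: mulr_ge0; [apply: exprn_ge0; lra | lra].
  have hq : 0 <= al * (mu / L - al ^+ 2).
    have : al * al <= al * (mu / L / al) by rewrite ler_pM2l.
    have -> : al * (mu / L / al) = mu / L by field; lra.
    move=> h; apply: mulr_ge0; [lra | rewrite expr2; lra].
  have W0 := sqnorm_ge0 (u + ((1 - al) / al) *: d).
  lazymatch goal with |- is_true ((0 : R) <= ?e) => have -> : e =
    (1 - al) * (B - (A + dotv G (- (th *: d)) + sqnorm G / (2 * L) + mu / 2 * sqnorm (- (th *: d))))
    + al * (0 - (A + dotv G (- (u + th *: d)) + sqnorm G / (2 * L) + mu / 2 * sqnorm (- (u + th *: d))))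
    + (al - rho) * B + L * (al * (mu / L - al ^+ 2) * sqnorm (u + ((1 - al) / al) *: d) + c2 * sqnorm d) / 2 end.
    rewrite /c2 hr hth /sqnorm !(dotvDl, dotvDr, dotvZl, dotvZr, dotvNl, dotvNr).
    rewrite ?(dotvC d u) ?(dotvC G u) ?(dotvC G d).
    field; lra.
  have h1 : 0 <= (1 - al) * (B - (A + dotv G (- (th *: d)) + sqnorm G / (2 * L) + mu / 2 * sqnorm (- (th *: d)))).
    by apply: mulr_ge0; lra.
  have h2 : 0 <= al * (0 - (A + dotv G (- (u + th *: d)) + sqnorm G / (2 * L) + mu / 2 * sqnorm (- (u + th *: d)))).
    by apply: mulr_ge0; lra.
  have h3 : 0 <= (al - rho) * B by apply: mulr_ge0; lra.
  have h4 : 0 <= L * (al * (mu / L - al ^+ 2) * sqnorm (u + ((1 - al) / al) *: d) + c2 * sqnorm d) / 2.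
    apply: divr_ge0 => //; apply: mulr_ge0; first lra.
    by apply: addr_ge0; apply: mulr_ge0.
  lra.
Qed.
End S.
Unset Implicit Arguments.

Theorem mainTheorem14 (R : realType) (n : nat)
  (f : 'rV[R]_n -> R) (gradf : 'rV[R]_n -> 'rV[R]_n) (g : 'rV[R]_n -> \bar R)
  (L mu : R) (xstar : 'rV[R]_n) (r : R) (x y : nat -> 'rV[R]_n) :
  0 < mu -> mu < L ->
  is_gradient f gradf -> lipschitz_grad gradf L -> strongly_convex f mu ->
  proper_fun g -> closed_fun g -> convex_efun g ->
  is_argmin (compF f g) xstar ->
  let q := mu / L in
  Num.sqrt q < r -> r < (Num.sqrt q)^-1 ->
  let alpha := r * Num.sqrt q in
  let theta := (1 - r^-1 * Num.sqrt q) * (1 - r * Num.sqrt q) / (1 - q) in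
  y 1%N = x 1%N ->
  (forall k, (1 <= k)%N -> is_TL g gradf L (y k) (x k.+1)) ->
  (forall k, (1 <= k)%N -> y k.+1 = x k.+1 + theta *: (x k.+1 - x k)) ->
  forall k, (1 <= k)%N ->
    (compF f g (x k.+1) - compF f g xstar
      + (L * alpha ^+ 2 / 2 *
         sqnorm (x k.+1 - xstar + (alpha^-1 - 1) *: (x k.+1 - x k)))%:E
     <= ((1 - Num.min (mu / (alpha * L)) alpha) ^+ k)%:E *
        (compF f g (x 1%N) - compF f g xstar
          + (L * alpha ^+ 2 / 2 * sqnorm (x 1%N - xstar))%:E))%E.
Proof.
Proof.
move=> mu0 muL hg hL hsc [gnm [x0 gx0]] _ hconv hstar q sq_r r_sq al th hy1 hT hyk k hk.
have L0 : 0 < L by lra.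
have q0 : 0 < q by rewrite /q divr_gt0.
have q1 : q < 1 by rewrite /q ltr_pdivrMr // mul1r.
have s0 : 0 < Num.sqrt q by rewrite sqrtr_gt0.
have ss : Num.sqrt q * Num.sqrt q = q by rewrite -expr2 sqr_sqrtr // ltW.
have r0 : 0 < r by lra.
have hrs : r * Num.sqrt q < 1 by move: r_sq; rewrite -div1r ltr_pdivlMr.
have al0 : 0 < al by rewrite /al mulr_gt0.
have qal : q < al by rewrite /al; nra.
have al1 : al < 1 by exact: hrs.
have hth : th = (1 - mu / L / al) * (1 - al) / (1 - mu / L).
  have e : r^-1 * Num.sqrt q = q / (r * Num.sqrt q).
    rewrite -[X in _ = X / _]ss; field; apply/andP; split; rewrite gt_eqF //.
  by rewrite /th e.
set rho := Num.min (mu / (al * L)) al.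
have hrho : (rho = mu / L / al /\ mu / L / al <= al) \/ (rho = al /\ al <= mu / L / al).
  have e : mu / (al * L) = mu / L / al by field; apply/andP; split; rewrite gt_eqF.
  rewrite /rho e; case: (leP (mu / L / al) al) => h.
    by left.
  by right; split => //; exact: ltW.
have rhoal : rho <= al by case: hrho => -[-> h] //; lra.
have rho1 : 0 < 1 - rho by lra.
have gx0f : g x0 \is a fin_num by rewrite fin_numE gnm gx0.
have finT : forall j, (1 <= j)%N -> g (x j.+1) \is a fin_num.
  move=> j hj; rewrite fin_numE gnm andTb; apply/negP => /eqP E1.
  have := hT j hj x0; rewrite /prox_obj E1 addye // -(fineK gx0f) -EFinD leye_eq.
  by [].
have gsf : g xstar \is a fin_num.
  rewrite fin_numE gnm andTb; apply/negP => /eqP E1.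
  have := hstar x0; rewrite /compF E1 addey // -(fineK gx0f) -EFinD leye_eq.
  by [].
pose Fr := fun v => f v + fine (g v).
have compE : forall v, g v \is a fin_num -> compF f g v = (Fr v)%:E.
  by move=> v hv; rewrite /compF /Fr EFinD fineK.
have Fr_ge : forall v, g v \is a fin_num -> Fr xstar <= Fr v.
  by move=> v hv; have := hstar v; rewrite !compE // lee_fin.
have [gx1|gx1] := eqVneq (g (x 1%N)) +oo%E.
  have hinf : forall e1 e2 : R, (+oo - e1%:E + e2%:E)%E = +oo%E by [].
  rewrite (compE _ gsf) /compF gx1 addey // hinf.
  rewrite mulry gtr0_sg ?mul1e ?leey //.
  by apply: exprn_gt0.
have gx1f : g (x 1%N) \is a fin_num by rewrite fin_numE gnm gx1.
have finall : forall j, (1 <= j)%N -> g (x j) \is a fin_num.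
  by case=> [//|[_|j _]] //; apply: finT.
pose E := fun cur prev : 'rV[R]_n => Fr cur - Fr xstar
  + L * al ^+ 2 / 2 * sqnorm (cur - xstar + (al^-1 - 1) *: (cur - prev)).
have step : forall j prev, (1 <= j)%N -> y j = x j + th *: (x j - prev) ->
    E (x j.+1) (x j) <= (1 - rho) * E (x j) prev.
  move=> j prev hj hyj.
  have fj := finall j hj; have fj1 := finT j hj.
  have K1 := @key R n f gradf g L mu hg hL L0 hsc hconv (y j) (x j.+1) (x j) _ _
    (hT j hj) (esym (fineK fj)) (esym (fineK fj1)).
  have K2 := @key R n f gradf g L mu hg hL L0 hsc hconv (y j) (x j.+1) xstar _ _
    (hT j hj) (esym (fineK gsf)) (esym (fineK fj1)).
  rewrite hyj in K1 K2.
  set G := L *: (x j + th *: (x j - prev) - x j.+1) in K1 K2.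
  have e1 : x j - (x j + th *: (x j - prev)) = - (th *: (x j - prev)).
    by apply/rowP => i; rewrite !mxE; ring.
  have e2 : xstar - (x j + th *: (x j - prev)) = - ((x j - xstar) + th *: (x j - prev)).
    by apply/rowP => i; rewrite !mxE; ring.
  rewrite e1 in K1; rewrite e2 in K2.
  have e3 : x j.+1 - xstar + (al^-1 - 1) *: (x j.+1 - x j) = (x j - xstar) + th *: (x j - prev)
     - L^-1 *: G + (al^-1 - 1) *: (th *: (x j - prev) - L^-1 *: G).
    rewrite /G; apply/rowP => i; rewrite !mxE; field; lra.
  rewrite /E e3.
  apply: (@step_alg R n L mu al th rho _ _ _ _ G mu0 muL qal al1 hth hrho).
  - by rewrite subr_ge0; apply: Fr_ge.
  - rewrite /Fr; lra.
  - rewrite /Fr; lra.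
have ind : forall j, (1 <= j)%N -> E (x j.+1) (x j) <= (1 - rho) ^+ j * E (x 1%N) (x 1%N).
  elim=> [//|j IH] hj.
  case: j IH hj => [_ _ | j IH _].
    rewrite expr1; apply: step => //; rewrite hy1 subrr scaler0 addr0 //.
  apply: (le_trans (step j.+2 (x j.+1) _ (hyk j.+1 _))) => //.
  rewrite exprS -mulrA; apply: ler_wpM2l; [lra | exact: IH].
have h := ind k hk.
move: h; rewrite /E subrr scaler0 addr0 => h.
rewrite (compE _ (finT k hk)) (compE _ gsf) (compE _ gx1f).
rewrite -!EFinB -!EFinD -EFinM lee_fin.
clearbody Fr rho.
exact: h.
Qed.
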